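(* Let $0<\gamma<\frac n2$ and $1\leq k<\frac n2-\gamma$, let $a_0=\frac{n-k-2}{2}$, and define $$\Theta(a,b)=4^\gamma\frac{\Gamma\big(\frac{1+\gamma}{2}+\frac{a+bi}{2}\big)}{\Gamma\big(\frac{1-\gamma}{2}+\frac{a+bi}{2}\big)}\,\frac{\Gamma\big(\frac{1+\gamma}{2}+\frac{a-bi}{2}\big)}{\Gamma\big(\frac{1-\gamma}{2}+\frac{a-bi}{2}\big)}.$$ Then: (i) $\frac{\partial\Theta}{\partial a}(a,\beta i)>0$ for all $a\geq a_0$ and $0<\beta\leq\frac k2$; (ii) $\frac{\partial\Theta}{\partial\beta}(a,\beta i)<0$ for all $a\geq a_0$ and $0<\beta\leq\frac k2$; (iii) $\frac{\partial\Theta}{\partial b}(a,b)>0$ for all $a\geq a_0$ and real $b>0$.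
   Context: For $a\geq a_0$ and $b$ either purely imaginary with $|b|\leq\frac k2$ or real, $\Theta(a,b)$ is a positive real number. *)

(* Defs.v *)
From Stdlib Require Import Reals Factorial.
From Coquelicot Require Import Coquelicot.
Open Scope R_scope.

Definition cpow_nat (n : nat) (z : C) : C :=
  (exp (Re z * ln (INR n)) * cos (Im z * ln (INR n)),
   exp (Re z * ln (INR n)) * sin (Im z * ln (INR n))).

Fixpoint poch_prod (z : C) (n : nat) : C :=
  match n with
  | O => z
  | S m => Cmult (poch_prod z m) (Cplus z (RtoC (INR (S m))))
  end.

Definition Gamma_seq (z : C) (n : nat) : C :=
  Cdiv (Cmult (cpow_nat n z) (RtoC (INR (Factorial.fact n)))) (poch_prod z n).

(* Euler's Gamma function via Gauss' limit formula
   Gamma z = lim_{n -> oo} n^z n! / (z (z+1) ... (z+n)),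
   valid for z not in {0,-1,-2,...}; real and imaginary parts taken as limits. *)
Definition CGamma (z : C) : C :=
  (real (Lim_seq (fun n => Re (Gamma_seq z n))),
   real (Lim_seq (fun n => Im (Gamma_seq z n)))).

Definition Theta (gam a : R) (b : C) : C :=
  let zp := Cplus (RtoC a) (Cmult Ci b) in
  let zm := Cminus (RtoC a) (Cmult Ci b) in
  Cmult (RtoC (Rpower 4 gam))
   (Cmult
     (Cdiv (CGamma (Cplus (RtoC ((1 + gam) / 2)) (Cdiv zp (RtoC 2))))
           (CGamma (Cplus (RtoC ((1 - gam) / 2)) (Cdiv zp (RtoC 2)))))
     (Cdiv (CGamma (Cplus (RtoC ((1 + gam) / 2)) (Cdiv zm (RtoC 2))))
           (CGamma (Cplus (RtoC ((1 - gam) / 2)) (Cdiv zm (RtoC 2)))))).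

(* Main.v *)
Require Import Defs.
From Stdlib Require Import Reals Lra Lia Ranalysis5 Factorial.
From Coquelicot Require Import Coquelicot.
Open Scope R_scope.

Lemma INR_p1_pos k : 0 < INR k + 1.
Proof. pose proof (pos_INR k); lra. Qed.

Lemma tele_aux (s : nat -> R) (C : R) :
  (forall k, Rabs (s (S k) - s k) <= C * (/ (INR k + 1) - / (INR k + 2))) ->
  forall k m, Rabs (s (m + k)%nat - s k) <= C * (/ (INR k + 1) - / (INR (m + k) + 1)).
Proof.
intros H k m; induction m as [|m IH].
- simpl. replace (s k - s k) with 0 by ring. rewrite Rabs_R0. lra.
- replace (s (S m + k)%nat - s k) with ((s (S (m+k)) - s (m+k)%nat) + (s (m+k)%nat - s k)) by (simpl; ring).
  eapply Rle_trans; [apply Rabs_triang|].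
  specialize (H (m+k)%nat).
  replace (INR (S m + k) + 1) with (INR (m+k) + 2) by (change (S m + k)%nat with (S (m + k)); rewrite S_INR; ring).
  lra.
Qed.

Lemma tele_cauchy (s : nat -> R) (C : R) :
  (forall k, Rabs (s (S k) - s k) <= C * (/ (INR k + 1) - / (INR k + 2))) ->
  exists l, Un_cv s l /\ forall k, Rabs (l - s k) <= C / (INR k + 1).
Proof.
intros H.
assert (HC : 0 <= C).
{ specialize (H O). simpl in H. 
  assert (0 < / (0+1) - /(0+2)) by (replace (/(0+1) - /(0+2)) with (/2) by field; lra).
  pose proof (Rabs_pos (s 1%nat - s 0%nat)).
  destruct (Rle_or_lt 0 C); auto. nra. }
assert (Hb : forall k m, (k <= m)%nat -> Rabs (s m - s k) <= C / (INR k + 1)).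
{ intros k m Hkm. replace m with ((m - k) + k)%nat by lia.
  eapply Rle_trans; [apply tele_aux; auto|].
  pose proof (INR_p1_pos k). pose proof (INR_p1_pos (m-k+k)).
  assert (0 < / (INR (m - k + k) + 1)) by (apply Rinv_0_lt_compat; lra).
  unfold Rdiv. nra. }
assert (Hc : Cauchy_crit s).
{ intros eps Heps.
  destruct (INR_archimed eps (2*C) Heps) as [N HN].
  exists N. intros n m Hn Hm. unfold R_dist.
  pose proof (Hb N n Hn). pose proof (Hb N m Hm).
  replace (s n - s m) with ((s n - s N) - (s m - s N)) by ring.
  eapply Rle_lt_trans; [apply Rabs_triang|]. rewrite Rabs_Ropp.
  assert (C / (INR N + 1) * 2 < eps).
  { pose proof (INR_p1_pos N). apply Rmult_lt_reg_r with (INR N + 1); auto.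
    unfold Rdiv. field_simplify; try lra. }
  lra. }
destruct (Rcomplete.R_complete s Hc) as [l Hl].
exists l; split; auto.
intros k.
apply is_lim_seq_Reals in Hl.
assert (Hk : is_lim_seq (fun m => Rabs (s (m + k)%nat - s k)) (Rabs (l - s k))).
{ apply (is_lim_seq_abs _ (Finite (l - s k))).
  apply is_lim_seq_minus'; [|apply is_lim_seq_const].
  now apply (is_lim_seq_incr_n s k l). }
assert (Rbar_le (Rabs (l - s k)) (C / (INR k + 1))).
{ apply (is_lim_seq_le _ _ _ _ (fun m => Hb k (m + k)%nat ltac:(lia)) Hk (is_lim_seq_const _)). }
exact H0.
Qed.

Lemma ln_le_sub1 u : 0 < u -> ln u <= u - 1.
Proof. intros H. pose proof (exp_ineq1_le (ln u)). rewrite exp_ln in H0; lra. Qed.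

Lemma ln_diff_bounds p q : 0 < p -> 0 < q ->
  (q - p) / q <= ln q - ln p <= (q - p) / p.
Proof.
intros Hp Hq; split.
- pose proof (ln_le_sub1 (p / q) ltac:(apply Rdiv_lt_0_compat; lra)).
  rewrite ln_div in H by lra.
  replace ((q - p) / q) with (1 - p / q) by (field; lra). lra.
- pose proof (ln_le_sub1 (q / p) ltac:(apply Rdiv_lt_0_compat; lra)).
  rewrite ln_div in H by lra.
  replace ((q - p) / p) with (q / p - 1) by (field; lra). lra.
Qed.

Lemma atan_bound3 t : Rabs (atan t - t) <= Rabs t * t ^ 2.
Proof.
set (f := fun u => atan u - u).
set (f' := fun u => / (1 + u ^ 2) - 1).
assert (Hd : forall c, derivable_pt_lim f c (f' c)).
{ intros c. unfold f, f'. apply derivable_pt_lim_minus.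
  apply derivable_pt_lim_atan. apply derivable_pt_lim_id. }
assert (Hf' : forall c, Rabs (f' c) <= c ^ 2).
{ intros c. unfold f'. assert (0 < 1 + c^2) by nra.
  replace (/ (1 + c ^ 2) - 1) with (- (c^2 / (1 + c^2))) by (field; lra).
  rewrite Rabs_Ropp, Rabs_pos_eq.
  - apply Rmult_le_reg_r with (1 + c^2); auto. unfold Rdiv. rewrite Rmult_assoc, Rinv_l by lra. nra.
  - apply Rdiv_le_0_compat; nra. }
destruct (Rtotal_order 0 t) as [Ht|[Ht|Ht]].
- destruct (MVT_cor2 f f' 0 t Ht (fun c _ => Hd c)) as [c [Hc Hct]].
  unfold f in Hc. rewrite atan_0 in Hc.
  replace (atan t - t) with (f' c * (t - 0)) by lra.
  rewrite Rabs_mult. specialize (Hf' c).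
  rewrite (Rabs_pos_eq (t - 0)) by lra. rewrite (Rabs_pos_eq t) by lra.
  assert (c^2 <= t^2) by nra.
  apply Rle_trans with (c^2 * (t - 0)); [apply Rmult_le_compat_r; lra|].
  replace (t * t^2) with (t^2 * (t - 0)) by ring; apply Rmult_le_compat_r; lra.
- rewrite <- Ht, atan_0. replace (0 - 0) with 0 by ring. rewrite Rabs_R0. simpl. lra.
- destruct (MVT_cor2 f f' t 0 Ht (fun c _ => Hd c)) as [c [Hc Hct]].
  unfold f in Hc. rewrite atan_0 in Hc.
  replace (atan t - t) with (- (f' c * (0 - t))) by lra.
  rewrite Rabs_Ropp, Rabs_mult. specialize (Hf' c).
  rewrite (Rabs_pos_eq (0 - t)) by lra. rewrite (Rabs_left t) by lra.
  assert (c^2 <= t^2) by nra.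
  apply Rle_trans with (c^2 * (0 - t)); [apply Rmult_le_compat_r; lra|].
  replace (- t * t^2) with (t^2 * (0 - t)) by ring; apply Rmult_le_compat_r; lra.
Qed.

Lemma tele_cauchy' (s : nat -> R) (C : R) :
  (forall k, Rabs (s (S k) - s k) <= C / ((INR k + 1) * (INR k + 2))) ->
  exists l, Un_cv s l /\ forall k, Rabs (l - s k) <= C / (INR k + 1).
Proof.
intros H; apply tele_cauchy. intros k. 
replace (C * (/ (INR k + 1) - / (INR k + 2))) with (C / ((INR k + 1) * (INR k + 2))).
apply H. pose proof (INR_p1_pos k). field; lra.
Qed.

Lemma frac_le a d1 d2 : 0 <= a -> 0 < d1 -> d1 <= d2 -> a / d2 <= a / d1.
Proof. intros. unfold Rdiv. apply Rmult_le_compat_l; auto. apply Rinv_le_contravar; lra. Qed.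

Lemma frac_le_num a b d : a <= b -> 0 < d -> a / d <= b / d.
Proof. intros. unfold Rdiv. apply Rmult_le_compat_r; auto. left; apply Rinv_0_lt_compat; lra. Qed.

Lemma step_alg x y N u v w : 0 < x -> 1 <= N ->
  1 / (N + 1) <= u <= 1 / N -> x / (x + N + 1) <= v <= x / (N + 1) ->
  0 <= w <= y ^ 2 / (x + N + 1) ^ 2 ->
  Rabs (x * u - v - w / 2) <= (x * (x + 1) + y ^ 2) / (N * (N + 1)).
Proof.
intros Hx HN Hu Hv Hw.
set (P := x + N + 1) in *.
assert (HP : N + 1 <= P) by (unfold P; lra).
assert (Hxu1 : x * (1 / (N+1)) <= x * u) by (apply Rmult_le_compat_l; lra).
assert (Hxu2 : x * u <= x * (1 / N)) by (apply Rmult_le_compat_l; lra).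
assert (E1 : x * (1 / N) - x / P = x * (x + 1) / (N * P)) by (unfold P; field; lra).
assert (E2 : x * (x+1) / (N * P) <= x * (x+1) / (N * (N+1))).
{ apply frac_le; [nra| nra | apply Rmult_le_compat_l; lra]. }
assert (E3 : x * (x+1) / (N * (N+1)) <= (x * (x + 1) + y ^ 2) / (N * (N + 1))).
{ apply frac_le_num; [nra| nra]. }
assert (E4 : y ^ 2 / P ^ 2 <= y^2 / (N * (N + 1))).
{ apply frac_le; [nra|nra|]. simpl. nra. }
assert (E5 : y^2 / (N * (N + 1)) <= (x * (x + 1) + y ^ 2) / (N * (N + 1))).
{ apply frac_le_num; [nra| nra]. }
assert (E6 : x * (1 / (N+1)) = x / (N+1)) by (field; lra).
apply Rabs_le; split; lra.
Qed.

Lemma step_alg_th x y N u : 0 < x -> 1 <= N ->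
  1 / (N + 1) <= u <= 1 / N ->
  Rabs (y * u - atan (y / (x + N + 1))) <= (Rabs y * (x + 1) + Rabs y * y ^ 2) / (N * (N + 1)).
Proof.
intros Hx HN Hu.
set (P := x + N + 1).
assert (HP : N + 1 <= P) by (unfold P; lra).
set (t := y / P).
replace (y * u - atan t) with (y * (u - 1 / P) - (atan t - t)) by (unfold t; field; lra).
eapply Rle_trans; [apply Rabs_triang|]. rewrite Rabs_Ropp, Rabs_mult.
assert (H1 : 0 <= u - 1 / P <= (x + 1) / (N * (N + 1))).
{ split.
  - assert (1 / P <= 1 / (N+1)) by (apply frac_le; lra). lra.
  - assert (E1 : 1 / N - 1 / P = (x + 1) / (N * P)) by (unfold P; field; lra).
    assert ((x + 1) / (N * P) <= (x + 1) / (N * (N + 1))) by (apply frac_le; nra).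
    lra. }
rewrite (Rabs_pos_eq (u - 1/P)) by lra.
pose proof (atan_bound3 t) as Ha.
assert (Ht : Rabs t <= Rabs y).
{ unfold t, Rdiv. rewrite Rabs_mult. rewrite (Rabs_pos_eq (/ P)) by (left; apply Rinv_0_lt_compat; lra).
  assert (/ P <= 1). { replace 1 with (/ 1) by field. apply Rinv_le_contravar; lra. }
  pose proof (Rabs_pos y). nra. }
assert (Ht2 : t ^ 2 <= y ^ 2 / (N * (N + 1))).
{ unfold t. replace ((y / P) ^ 2) with (y ^ 2 / P ^ 2) by (field; lra).
  apply frac_le; [nra|nra|]. simpl. nra. }
assert (A1 : Rabs y * (u - 1 / P) <= Rabs y * ((x + 1) / (N * (N + 1)))).
{ apply Rmult_le_compat_l; [apply Rabs_pos| lra]. }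
assert (A2 : Rabs t * t ^ 2 <= Rabs y * (y ^ 2 / (N * (N + 1)))).
{ apply Rmult_le_compat; [apply Rabs_pos| nra | auto | auto]. }
assert (E : (Rabs y * (x + 1) + Rabs y * y ^ 2) / (N * (N + 1)) =
   Rabs y * ((x + 1) / (N * (N + 1))) + Rabs y * (y ^ 2 / (N * (N + 1)))) by (field; nra).
lra.
Qed.

Definition Ssq (x y : R) (n : nat) := sum_f_R0 (fun j => ln ((x + INR j) ^ 2 + y ^ 2)) n.
Definition Lg (x y : R) (n : nat) := x * ln (INR n) + ln (INR (fact n)) - / 2 * Ssq x y n.
Definition Th (x y : R) (n : nat) := y * ln (INR n) - sum_f_R0 (fun j => atan (y / (x + INR j))) n.

Lemma u_bounds k : let N := INR k + 1 in
  1 / (N + 1) <= ln (N + 1) - ln N <= 1 / N.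
Proof.
intros N. pose proof (INR_p1_pos k). fold N in H.
destruct (ln_diff_bounds N (N+1)) as [A B]; try lra.
Qed.

Lemma Lg_step x y k : 0 < x ->
  Rabs (Lg x y (S (S k)) - Lg x y (S k)) <= (x * (x + 1) + y ^ 2) / ((INR k + 1) * (INR k + 2)).
Proof.
intros Hx. pose proof (INR_p1_pos k) as Hk0. pose proof (pos_INR k) as Hk1.
set (N := INR k + 1) in *.
assert (HN1 : 1 <= N) by (unfold N; lra).
replace (INR k + 2) with (N + 1) by (unfold N; ring).
assert (EN : INR (S k) = N) by (unfold N; rewrite S_INR; ring).
assert (EN1 : INR (S (S k)) = N + 1) by (rewrite S_INR, EN; ring).
unfold Lg, Ssq.
change (sum_f_R0 (fun j => ln ((x + INR j) ^ 2 + y ^ 2)) (S (S k))) with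
  (sum_f_R0 (fun j => ln ((x + INR j) ^ 2 + y ^ 2)) (S k) + ln ((x + INR (S (S k))) ^ 2 + y ^ 2)).
change (fact (S (S k))) with (S (S k) * fact (S k))%nat.
rewrite mult_INR, ln_mult; [| rewrite EN1; lra | apply INR_fact_lt_0].
rewrite EN, EN1.
set (P := x + (N + 1)).
assert (HP : 0 < P) by (unfold P; lra).
assert (EP : ln (P ^ 2 + y ^ 2) = (ln (P^2 + y^2) - ln (P^2)) + 2 * ln P).
{ replace (P ^ 2) with (P * P) by ring. rewrite ln_mult by lra. ring. }
rewrite EP.
destruct (u_bounds k) as [U1 U2]. fold N in U1, U2.
destruct (ln_diff_bounds (N+1) P) as [V1 V2]; try lra.
destruct (ln_diff_bounds (P^2) (P^2 + y^2)) as [W1 W2]; try nra.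
pose proof (step_alg x y N (ln (N + 1) - ln N) (ln P - ln (N+1)) (ln (P ^ 2 + y ^ 2) - ln (P ^ 2))
  Hx ltac:(lra)) as S.
replace (x + N + 1) with P in S by (unfold P; ring).
replace (P - (N + 1)) with x in V1, V2 by (unfold P; ring).
replace (P ^ 2 + y ^ 2 - P ^ 2) with (y ^ 2) in W1, W2 by ring.
assert (0 <= y ^ 2 / (P ^ 2 + y ^ 2)) by (apply Rdiv_le_0_compat; nra).
specialize (S (conj U1 U2) (conj V1 V2) ltac:(lra)).
match goal with |- Rabs ?a <= _ => replace a with
  (x * (ln (N + 1) - ln N) - (ln P - ln (N + 1)) - (ln (P ^ 2 + y ^ 2) - ln (P ^ 2)) / 2) by field end.
exact S.
Qed.

Lemma Th_step x y k : 0 < x ->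
  Rabs (Th x y (S (S k)) - Th x y (S k)) <= (Rabs y * (x + 1) + Rabs y * y ^ 2) / ((INR k + 1) * (INR k + 2)).
Proof.
intros Hx. pose proof (INR_p1_pos k) as Hk0. pose proof (pos_INR k) as Hk1.
set (N := INR k + 1) in *.
assert (HN1 : 1 <= N) by (unfold N; lra).
replace (INR k + 2) with (N + 1) by (unfold N; ring).
assert (EN : INR (S k) = N) by (unfold N; rewrite S_INR; ring).
assert (EN1 : INR (S (S k)) = N + 1) by (rewrite S_INR, EN; ring).
unfold Th.
change (sum_f_R0 (fun j => atan (y / (x + INR j))) (S (S k))) with
  (sum_f_R0 (fun j => atan (y / (x + INR j))) (S k) + atan (y / (x + INR (S (S k))))).
rewrite EN, EN1.
destruct (u_bounds k) as [U1 U2]. fold N in U1, U2.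
pose proof (step_alg_th x y N (ln (N + 1) - ln N) Hx ltac:(lra) (conj U1 U2)) as S.
replace (x + N + 1) with (x + (N + 1)) in S by ring.
match goal with |- Rabs ?a <= _ => replace a with
  (y * (ln (N + 1) - ln N) - atan (y / (x + (N + 1)))) by ring end.
exact S.
Qed.

Definition ell (x y : R) : R := real (Lim_seq (Lg x y)).
Definition th (x y : R) : R := real (Lim_seq (Th x y)).

Lemma lim_from_shift (s : nat -> R) (l : R) : Un_cv (fun k => s (S k)) l ->
  is_lim_seq s l /\ real (Lim_seq s) = l.
Proof.
intros H. apply is_lim_seq_Reals in H. apply is_lim_seq_incr_1 in H.
split; auto. rewrite (is_lim_seq_unique _ _ H). reflexivity.
Qed.

Lemma ell_lim x y : 0 < x -> is_lim_seq (Lg x y) (ell x y).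
Proof.
intros Hx.
destruct (tele_cauchy' (fun k => Lg x y (S k)) _ (fun k => Lg_step x y k Hx)) as [l [Hl _]].
destruct (lim_from_shift _ _ Hl) as [A B]. unfold ell. rewrite B. exact A.
Qed.

Lemma th_lim x y : 0 < x -> is_lim_seq (Th x y) (th x y).
Proof.
intros Hx.
destruct (tele_cauchy' (fun k => Th x y (S k)) _ (fun k => Th_step x y k Hx)) as [l [Hl _]].
destruct (lim_from_shift _ _ Hl) as [A B]. unfold th. rewrite B. exact A.
Qed.

Lemma Lg_opp x y n : Lg x (- y) n = Lg x y n.
Proof.
unfold Lg, Ssq. f_equal. f_equal. apply sum_eq. intros. f_equal. ring.
Qed.

Lemma sum_opp' (f : nat -> R) n : sum_f_R0 (fun j => - f j) n = - sum_f_R0 f n.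
Proof. induction n; simpl; [ring| rewrite IHn; ring]. Qed.

Lemma Th_opp x y n : Th x (- y) n = - Th x y n.
Proof.
unfold Th. rewrite <- (sum_eq (fun j => - atan (y / (x + INR j)))).
- rewrite sum_opp'. ring.
- intros. unfold Rdiv. rewrite Ropp_mult_distr_l_reverse, atan_opp. reflexivity.
Qed.

Lemma ell_opp x y : ell x (- y) = ell x y.
Proof. unfold ell. f_equal. apply Lim_seq_ext. intros; apply Lg_opp. Qed.

Lemma th_opp x y : 0 < x -> th x (- y) = - th x y.
Proof.
intros Hx.
assert (H : is_lim_seq (Th x (- y)) (- th x y)).
{ apply is_lim_seq_ext with (fun n => - Th x y n).
  - intros; rewrite Th_opp; ring.
  - apply (is_lim_seq_opp _ (Finite (th x y))). apply th_lim; auto. }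
pose proof (th_lim x (- y) Hx) as H2.
pose proof (is_lim_seq_unique _ _ H) as E1. pose proof (is_lim_seq_unique _ _ H2) as E2.
rewrite E1 in E2. injection E2. auto.
Qed.

Lemma th_0 x : th x 0 = 0.
Proof.
unfold th. rewrite (Lim_seq_ext _ (fun _ => 0)).
- rewrite Lim_seq_const. reflexivity.
- intros n. unfold Th. rewrite Rmult_0_l.
  rewrite (sum_eq _ (fun _ => 0)). 
  + rewrite sum_cte. ring.
  + intros. unfold Rdiv. rewrite Rmult_0_l, atan_0. reflexivity.
Qed.

Definition pol (r t : R) : C := (r * cos t, r * sin t).

Lemma pol_mult r s r' t : Cmult (pol r s) (pol r' t) = pol (r * r') (s + t).
Proof.
unfold pol, Cmult; simpl. rewrite cos_plus, sin_plus. f_equal; ring.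
Qed.

Lemma pol_div r s r' t : r' <> 0 -> Cdiv (pol r s) (pol r' t) = pol (r / r') (s - t).
Proof.
intros H. unfold pol, Cdiv, Cinv, Cmult; cbn [fst snd]. rewrite cos_minus, sin_minus.
assert (E : (r' * cos t) ^ 2 + (r' * sin t) ^ 2 = r' * r').
{ pose proof (sin2_cos2 t) as T. unfold Rsqr in T. 
  replace ((r' * cos t) ^ 2 + (r' * sin t) ^ 2) with (r' * r' * (sin t * sin t + cos t * cos t)) by ring.
  rewrite T. ring. }
rewrite E. f_equal; field; auto.
Qed.

Lemma RtoC_pol r : RtoC r = pol r 0.
Proof. unfold pol, RtoC. rewrite cos_0, sin_0. f_equal; ring. Qed.

Lemma pol_of x y : 0 < x -> ((x, y) : C) = pol (exp (/ 2 * ln (x ^ 2 + y ^ 2))) (atan (y / x)).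
Proof.
intros Hx. unfold pol.
set (s := exp (/ 2 * ln (x ^ 2 + y ^ 2))).
assert (Hs : 0 < s) by apply exp_pos.
assert (Hs2 : s * s = x ^ 2 + y ^ 2).
{ unfold s. rewrite <- exp_plus. replace (/ 2 * ln (x ^ 2 + y ^ 2) + / 2 * ln (x ^ 2 + y ^ 2)) with (ln (x^2 + y^2)) by field.
  apply exp_ln. nra. }
assert (Hq : sqrt (1 + (y / x)²) = s / x).
{ apply sqrt_lem_1.
  - pose proof (Rle_0_sqr (y / x)); lra.
  - apply Rdiv_le_0_compat; lra.
  - unfold Rsqr. replace (s / x * (s / x)) with (s * s / (x * x)) by (field; lra).
    rewrite Hs2. field. lra. }
rewrite cos_atan, sin_atan, Hq. f_equal; field; split; lra.
Qed.

Lemma cpow_pol n z : cpow_nat n z = pol (exp (Re z * ln (INR n))) (Im z * ln (INR n)).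
Proof. reflexivity. Qed.

Lemma poch_pol x y n : 0 < x ->
  poch_prod (x, y) n = pol (exp (/ 2 * Ssq x y n)) (sum_f_R0 (fun j => atan (y / (x + INR j))) n).
Proof.
intros Hx. induction n as [|m IH].
- simpl poch_prod. unfold Ssq. simpl sum_f_R0. rewrite Rplus_0_r. apply pol_of; auto.
- change (poch_prod (x,y) (S m)) with (Cmult (poch_prod (x,y) m) (Cplus (x,y) (RtoC (INR (S m))))).
  rewrite IH.
  assert (E : Cplus (x, y) (RtoC (INR (S m))) = ((x + INR (S m), y) : C)).
  { unfold Cplus, RtoC; simpl. f_equal; ring. }
  rewrite E, pol_of by (pose proof (pos_INR (S m)); lra).
  rewrite pol_mult, <- exp_plus. unfold Ssq. change (sum_f_R0 ?f (S m)) with (sum_f_R0 f m + f (S m)). f_equal; f_equal; cbv beta; ring.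
Qed.

Lemma Gamma_seq_pol x y n : 0 < x ->
  Gamma_seq (x, y) n = pol (exp (Lg x y n)) (Th x y n).
Proof.
intros Hx. unfold Gamma_seq. rewrite cpow_pol, RtoC_pol, poch_pol by auto.
rewrite pol_mult, pol_div by (apply Rgt_not_eq, exp_pos).
unfold Lg, Th. simpl Re. simpl Im. f_equal.
- unfold Rminus. rewrite !exp_plus, exp_ln by apply INR_fact_lt_0.
  rewrite exp_Ropp. unfold Rdiv. reflexivity.
- ring.
Qed.

Lemma cont_exp x : continuity_pt exp x.
Proof. apply derivable_continuous_pt, derivable_pt_exp. Qed.

Lemma CGamma_pol x y : 0 < x -> CGamma (x, y) = pol (exp (ell x y)) (th x y).
Proof.
intros Hx. unfold CGamma, pol.
assert (L1 := ell_lim x y Hx). assert (L2 := th_lim x y Hx).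
assert (E1 : is_lim_seq (fun n => exp (Lg x y n)) (exp (ell x y))) by (apply is_lim_seq_continuous; [apply cont_exp| auto]).
assert (E2 : is_lim_seq (fun n => cos (Th x y n)) (cos (th x y))) by (apply is_lim_seq_continuous; [apply continuity_cos| auto]).
assert (E3 : is_lim_seq (fun n => sin (Th x y n)) (sin (th x y))) by (apply is_lim_seq_continuous; [apply continuity_sin| auto]).
f_equal.
- rewrite (Lim_seq_ext _ (fun n => exp (Lg x y n) * cos (Th x y n))).
  + rewrite (is_lim_seq_unique _ _ (is_lim_seq_mult' _ _ _ _ E1 E2)). reflexivity.
  + intros n. rewrite Gamma_seq_pol by auto. reflexivity.
- rewrite (Lim_seq_ext _ (fun n => exp (Lg x y n) * sin (Th x y n))).
  + rewrite (is_lim_seq_unique _ _ (is_lim_seq_mult' _ _ _ _ E1 E3)). reflexivity.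
  + intros n. rewrite Gamma_seq_pol by auto. reflexivity.
Qed.

Definition Dl (g x y : R) := ell (x + g) y - ell x y.

Lemma pol_0 r : pol r 0 = ((r, 0) : C).
Proof. unfold pol. rewrite cos_0, sin_0. f_equal; ring. Qed.

Lemma CG_ratio g x y : 0 < x -> 0 < g ->
  Cdiv (CGamma (x + g, y)) (CGamma (x, y)) = pol (exp (Dl g x y)) (th (x + g) y - th x y).
Proof.
intros Hx Hg. rewrite !CGamma_pol by lra.
rewrite pol_div by (apply Rgt_not_eq, exp_pos). f_equal.
unfold Dl. unfold Rminus. rewrite exp_plus, exp_Ropp. reflexivity.
Qed.

Lemma Theta_gen g a b1 b2 : 0 < g ->
  0 < (1 - g) / 2 + (a - b2) / 2 -> 0 < (1 - g) / 2 + (a + b2) / 2 ->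
  let x1 := (1 - g) / 2 + (a - b2) / 2 in
  let x2 := (1 - g) / 2 + (a + b2) / 2 in
  Theta g a (b1, b2) = pol (Rpower 4 g * (exp (Dl g x1 (b1 / 2)) * exp (Dl g x2 (- (b1 / 2)))))
     (0 + ((th (x1 + g) (b1 / 2) - th x1 (b1 / 2)) + (th (x2 + g) (- (b1 / 2)) - th x2 (- (b1 / 2))))).
Proof.
intros Hg H1 H2 x1 x2. unfold Theta.
assert (E1 : Cplus (RtoC ((1 + g) / 2)) (Cdiv (Cplus (RtoC a) (Cmult Ci (b1, b2))) (RtoC 2)) = ((x1 + g, b1 / 2) : C)).
{ unfold Cplus, Cdiv, Cmult, Cinv, RtoC, Ci, x1; cbn [fst snd]. f_equal; field. }
assert (E2 : Cplus (RtoC ((1 - g) / 2)) (Cdiv (Cplus (RtoC a) (Cmult Ci (b1, b2))) (RtoC 2)) = ((x1, b1 / 2) : C)).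
{ unfold Cplus, Cdiv, Cmult, Cinv, RtoC, Ci, x1; cbn [fst snd]. f_equal; field. }
assert (E3 : Cplus (RtoC ((1 + g) / 2)) (Cdiv (Cminus (RtoC a) (Cmult Ci (b1, b2))) (RtoC 2)) = ((x2 + g, - (b1 / 2)) : C)).
{ unfold Cminus; unfold Cplus, Copp, Cdiv, Cmult, Cinv, RtoC, Ci, x2; cbn [fst snd]. f_equal; field. }
assert (E4 : Cplus (RtoC ((1 - g) / 2)) (Cdiv (Cminus (RtoC a) (Cmult Ci (b1, b2))) (RtoC 2)) = ((x2, - (b1 / 2)) : C)).
{ unfold Cminus; unfold Cplus, Copp, Cdiv, Cmult, Cinv, RtoC, Ci, x2; cbn [fst snd]. f_equal; field. }
rewrite E1, E2, E3, E4.
rewrite !CG_ratio by auto. rewrite RtoC_pol, !pol_mult. reflexivity.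
Qed.

Lemma Theta_real g a beta : 0 < g ->
  0 < (1 - g) / 2 + (a - beta) / 2 -> 0 < (1 - g) / 2 + (a + beta) / 2 ->
  Theta g a (0, beta) = ((Rpower 4 g * exp (Dl g ((1 - g) / 2 + (a - beta) / 2) 0 + Dl g ((1 - g) / 2 + (a + beta) / 2) 0), 0) : C).
Proof.
intros Hg H1 H2. rewrite Theta_gen by auto.
replace (0 / 2) with 0 by field. rewrite Ropp_0, !th_0.
replace (0 + (0 - 0 + (0 - 0))) with 0 by ring. rewrite pol_0. f_equal.
rewrite exp_plus. reflexivity.
Qed.

Lemma Theta_cplx g a y : 0 < g -> 0 < (1 - g) / 2 + a / 2 ->
  Theta g a (RtoC y) = ((Rpower 4 g * exp (2 * Dl g ((1 - g) / 2 + a / 2) (y / 2)), 0) : C).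
Proof.
intros Hg H. unfold RtoC. rewrite Theta_gen by (replace (a - 0) with a by ring; replace (a + 0) with a by ring; auto).
replace (a - 0) with a by ring. replace (a + 0) with a by ring.
set (X := (1 - g) / 2 + a / 2).
assert (HX : 0 < X) by auto.
rewrite !th_opp by lra. unfold Dl. rewrite !ell_opp.
replace (0 + (th (X + g) (y / 2) - th X (y / 2) + (- th (X + g) (y / 2) - - th X (y / 2)))) with 0 by ring.
rewrite pol_0. f_equal. rewrite <- exp_plus. f_equal. f_equal. ring.
Qed.

Lemma tele_lim (s : nat -> R) (C : R) :
  (forall k, Rabs (s (S k) - s k) <= C / ((INR k + 1) * (INR k + 2))) ->
  Un_cv s (real (Lim_seq s)) /\ forall k, Rabs (real (Lim_seq s) - s k) <= C / (INR k + 1).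
Proof.
intros H. destruct (tele_cauchy' s C H) as [l [Hl Hb]].
assert (E : real (Lim_seq s) = l).
{ apply is_lim_seq_Reals in Hl. rewrite (is_lim_seq_unique _ _ Hl). reflexivity. }
rewrite E. auto.
Qed.

Lemma sq_bound k : / ((INR k + 1) * (INR k + 1)) <= 2 / ((INR k + 1) * (INR k + 2)).
Proof.
pose proof (pos_INR k).
apply Rmult_le_reg_r with ((INR k + 1) * (INR k + 1) * (INR k + 2)). nra.
field_simplify; nra.
Qed.

Lemma cont_from_derive f x l : is_derive f x l -> continuity_pt f x.
Proof. intros H. apply is_derive_Reals in H. apply derivable_continuous_pt. exists l. exact H. Qed.

Lemma CVU_of_bound (fn : nat -> R -> R) (G : R -> R) c (r : posreal) C :
  (forall y n, Boule c r y -> Rabs (G y - fn n y) <= C / (INR n + 1)) -> CVU fn G c r.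
Proof.
intros H eps Heps.
destruct (INR_archimed eps C Heps) as [N HN].
exists N. intros n y Hn Hy. eapply Rle_lt_trans; [apply H; auto|].
pose proof (pos_INR n). assert (INR N <= INR n) by (apply le_INR; auto).
assert (HC: 0 <= C).
{ pose proof (H y n Hy). pose proof (Rabs_pos (G y - fn n y)).
  destruct (Rle_or_lt 0 C); auto.
  assert (C / (INR n + 1) < 0). { unfold Rdiv. apply Rmult_neg_pos; [lra| apply Rinv_0_lt_compat; lra]. } lra. }
apply Rmult_lt_reg_r with (INR n + 1). lra.
unfold Rdiv. rewrite Rmult_assoc, Rinv_l by lra. nra.
Qed.

Section PartA.
Variable g : R.
Hypothesis Hg : 0 < g.

Definition tA (x : R) (j : nat) := 1 / (x + INR j) - 1 / (x + g + INR j).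
Definition fA (n : nat) (x : R) := g * ln (INR n) - sum_f_R0 (fun j => ln (x + g + INR j) - ln (x + INR j)) n.
Definition fA' (n : nat) (x : R) := sum_f_R0 (tA x) n.
Definition GA (x : R) := real (Lim_seq (fun n => fA' n x)).

Lemma Ssq0 x n : 0 < x -> Ssq x 0 n = 2 * sum_f_R0 (fun j => ln (x + INR j)) n.
Proof.
intros Hx. unfold Ssq. induction n as [|m IH].
- change (sum_f_R0 ?f 0%nat) with (f 0%nat). cbv beta. change (INR 0%nat) with 0.
  replace ((x + 0) ^ 2 + 0 ^ 2) with ((x + 0) * (x + 0)) by ring. rewrite ln_mult by lra. ring.
- change (sum_f_R0 ?f (S m)) with (sum_f_R0 f m + f (S m)). rewrite IH. cbv beta.
  pose proof (pos_INR (S m)).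
  replace ((x + INR (S m)) ^ 2 + 0 ^ 2) with ((x + INR (S m)) * (x + INR (S m))) by ring.
  rewrite ln_mult by lra. ring.
Qed.

Lemma sum_minus' (f h : nat -> R) n : sum_f_R0 (fun j => f j - h j) n = sum_f_R0 f n - sum_f_R0 h n.
Proof. induction n; simpl; [ring| rewrite IHn; ring]. Qed.

Lemma fA_eq x n : 0 < x -> fA n x = Lg (x + g) 0 n - Lg x 0 n.
Proof.
intros Hx. unfold fA, Lg. rewrite !Ssq0 by lra. rewrite sum_minus'. field.
Qed.

Lemma fA_lim x : 0 < x -> Un_cv (fun n => fA n x) (Dl g x 0).
Proof.
intros Hx. apply is_lim_seq_Reals.
apply is_lim_seq_ext with (fun n => Lg (x + g) 0 n - Lg x 0 n).
- intros; rewrite fA_eq; auto.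
- apply is_lim_seq_minus'; apply ell_lim; lra.
Qed.

Lemma tA_deriv x j : 0 < x -> is_derive (fun t => ln (t + g + INR j) - ln (t + INR j)) x (- tA x j).
Proof.
intros Hx. pose proof (pos_INR j). unfold tA. auto_derive.
- split; [lra| split; [lra| auto]].
- field; lra.
Qed.

Lemma fA_deriv x n : 0 < x -> derivable_pt_lim (fA n) x (fA' n x).
Proof.
intros Hx. unfold fA, fA'.
replace (sum_f_R0 (tA x) n) with (0 - sum_f_R0 (fun j => - tA x j) n) by (rewrite sum_opp'; ring).
apply derivable_pt_lim_minus.
- apply derivable_pt_lim_const.
- induction n as [|m IH].
  + simpl. apply is_derive_Reals. apply tA_deriv; auto.
  + simpl. apply (derivable_pt_lim_plus (fun t => sum_f_R0 (fun j => ln (t + g + INR j) - ln (t + INR j)) m)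
      (fun t => ln (t + g + INR (S m)) - ln (t + INR (S m)))).
    * exact IH.
    * apply is_derive_Reals. apply tA_deriv; auto.
Qed.

Lemma tA_cont x j : 0 < x -> continuity_pt (fun t => tA t j) x.
Proof.
intros Hx. pose proof (pos_INR j). apply cont_from_derive with (- 1 / (x + INR j) ^ 2 + 1 / (x + g + INR j) ^ 2).
unfold tA. auto_derive.
- split; lra.
- field; lra.
Qed.

Lemma fA'_cont x n : 0 < x -> continuity_pt (fA' n) x.
Proof.
intros Hx. unfold fA'. induction n as [|m IH].
- simpl. apply tA_cont; auto.
- simpl. apply (continuity_pt_plus (fun t => sum_f_R0 (tA t) m) (fun t => tA t (S m))); auto.
  apply tA_cont; auto.
Qed.

Lemma tA_eq x j : 0 < x -> tA x j = g / ((x + INR j) * (x + g + INR j)).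
Proof. intros Hx. pose proof (pos_INR j). unfold tA. field. lra. Qed.

Lemma tA_pos x j : 0 < x -> 0 < tA x j.
Proof.
intros Hx. pose proof (pos_INR j). rewrite tA_eq by auto.
apply Rdiv_lt_0_compat; auto. apply Rmult_lt_0_compat; lra.
Qed.

Lemma tA_step x k : 0 < x -> Rabs (fA' (S k) x - fA' k x) <= 2 * g / ((INR k + 1) * (INR k + 2)).
Proof.
intros Hx. unfold fA'. change (sum_f_R0 (tA x) (S k)) with (sum_f_R0 (tA x) k + tA x (S k)).
replace (sum_f_R0 (tA x) k + tA x (S k) - sum_f_R0 (tA x) k) with (tA x (S k)) by ring.
pose proof (tA_pos x (S k) Hx). rewrite Rabs_pos_eq by lra.
rewrite tA_eq by auto. rewrite S_INR. pose proof (pos_INR k).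
eapply Rle_trans with (g * / ((INR k + 1) * (INR k + 1))).
- apply frac_le; [lra| nra| ]. apply Rmult_le_compat; lra.
- pose proof (sq_bound k). unfold Rdiv in *. 
  replace (2 * g * / ((INR k + 1) * (INR k + 2))) with (g * (2 * / ((INR k + 1) * (INR k + 2)))) by ring.
  apply Rmult_le_compat_l; lra.
Qed.

Lemma GA_prop x : 0 < x -> Un_cv (fun n => fA' n x) (GA x) /\
   forall k, Rabs (GA x - fA' k x) <= 2 * g / (INR k + 1).
Proof. intros Hx. apply tele_lim. intros k. apply tA_step; auto. Qed.

Lemma DA_deriv x : 0 < x -> derivable_pt_lim (fun t => Dl g t 0) x (GA x).
Proof.
intros Hx.
set (r := mkposreal (x / 2) ltac:(lra)).
assert (Hb : forall y, Boule x r y -> 0 < y).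
{ intros y Hy. unfold Boule in Hy. simpl in Hy. apply Rabs_def2 in Hy. lra. }
apply (derivable_pt_lim_CVU fA fA' (fun t => Dl g t 0) GA x x r).
- unfold Boule. simpl. replace (x - x) with 0 by ring. rewrite Rabs_R0. lra.
- intros y n Hy. apply fA_deriv; auto.
- intros y Hy. apply fA_lim; auto.
- apply CVU_of_bound with (2 * g). intros y n Hy. apply GA_prop; auto.
- intros y Hy. apply (CVU_continuity fA' GA x r).
  + apply CVU_of_bound with (2 * g). intros z n Hz. apply GA_prop; auto.
  + intros n z Hz. apply fA'_cont; auto.
  + auto.
Qed.

Lemma fA'_ge0 x n : 0 < x -> fA' 0 x <= fA' n x.
Proof.
intros Hx. induction n as [|m IH]; [lra|].
unfold fA' in *. change (sum_f_R0 ?f (S m)) with (sum_f_R0 f m + f (S m)). pose proof (tA_pos x (S m) Hx). lra.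
Qed.

Lemma GA_pos x : 0 < x -> 0 < GA x.
Proof.
intros Hx. destruct (GA_prop x Hx) as [H _].
apply is_lim_seq_Reals in H.
pose proof (is_lim_seq_le _ _ _ _ (fun n => fA'_ge0 x n Hx) (is_lim_seq_const _) H) as L.
simpl in L. pose proof (tA_pos x 0 Hx). unfold fA' in L. simpl in L. lra.
Qed.

Lemma tA_decr x1 x2 j : 0 < x1 -> x1 <= x2 -> tA x2 j <= tA x1 j.
Proof.
intros H1 H2. pose proof (pos_INR j). rewrite !tA_eq by lra.
apply frac_le; [lra| apply Rmult_lt_0_compat; lra |]. apply Rmult_le_compat; lra.
Qed.

Lemma tA_sdecr x1 x2 j : 0 < x1 -> x1 < x2 -> tA x2 j < tA x1 j.
Proof.
intros H1 H2. pose proof (pos_INR j). rewrite !tA_eq by lra.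
unfold Rdiv. apply Rmult_lt_compat_l; auto. apply Rinv_lt_contravar.
- apply Rmult_lt_0_compat; apply Rmult_lt_0_compat; lra.
- apply Rmult_le_0_lt_compat; lra.
Qed.

Lemma GA_decr x1 x2 : 0 < x1 -> x1 < x2 -> GA x2 < GA x1.
Proof.
intros H1 H2.
assert (Hn : forall n, fA' n x2 - fA' n x1 <= tA x2 0 - tA x1 0).
{ induction n as [|m IH]; [unfold fA'; simpl; lra|].
  unfold fA' in *. change (sum_f_R0 ?f (S m)) with (sum_f_R0 f m + f (S m)). pose proof (tA_decr x1 x2 (S m) H1 ltac:(lra)). lra. }
destruct (GA_prop x1 H1) as [L1 _]. destruct (GA_prop x2 ltac:(lra)) as [L2 _].
apply is_lim_seq_Reals in L1, L2.
pose proof (is_lim_seq_le _ _ _ _ Hn (is_lim_seq_minus' _ _ _ _ L2 L1) (is_lim_seq_const _)) as L.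
simpl in L. pose proof (tA_sdecr x1 x2 0 H1 H2). lra.
Qed.

End PartA.

Section PartB.
Variable g X : R.
Hypothesis Hg : 0 < g.
Hypothesis HX : 0 < X.

Definition Ky (x : R) (n : nat) (y : R) := sum_f_R0 (fun j => y / ((x + INR j) ^ 2 + y ^ 2)) n.
Definition tB (y : R) (j : nat) := y / ((X + INR j) ^ 2 + y ^ 2) - y / ((X + g + INR j) ^ 2 + y ^ 2).
Definition fB (n : nat) (y : R) := Lg (X + g) y n - Lg X y n.
Definition fB' (n : nat) (y : R) := sum_f_R0 (tB y) n.
Definition GB (y : R) := real (Lim_seq (fun n => fB' n y)).

Lemma ln_sq_deriv x c y : 0 < x -> 0 <= c ->
  is_derive (fun t => ln ((x + c) ^ 2 + t ^ 2)) y (2 * (y / ((x + c) ^ 2 + y ^ 2))).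
Proof. intros. auto_derive. nra. field. nra. Qed.

Lemma Ssq_deriv x n y : 0 < x -> derivable_pt_lim (fun t => Ssq x t n) y (2 * Ky x n y).
Proof.
intros Hx. unfold Ssq, Ky. induction n as [|m IH].
- change (sum_f_R0 ?f 0%nat) with (f 0%nat). cbv beta.
  apply is_derive_Reals. apply ln_sq_deriv; [lra| apply pos_INR].
- change (sum_f_R0 ?f (S m)) with (sum_f_R0 f m + f (S m)). cbv beta.
  replace (2 * (sum_f_R0 (fun j => y / ((x + INR j) ^ 2 + y ^ 2)) m + y / ((x + INR (S m)) ^ 2 + y ^ 2)))
   with (2 * sum_f_R0 (fun j => y / ((x + INR j) ^ 2 + y ^ 2)) m + 2 * (y / ((x + INR (S m)) ^ 2 + y ^ 2))) by ring.
  apply (derivable_pt_lim_plus (fun t => sum_f_R0 (fun j => ln ((x + INR j) ^ 2 + t ^ 2)) m)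
      (fun t => ln ((x + INR (S m)) ^ 2 + t ^ 2))); auto.
  apply is_derive_Reals. apply ln_sq_deriv; [lra| apply pos_INR].
Qed.

Lemma Lg_deriv_y x n y : 0 < x -> derivable_pt_lim (fun t => Lg x t n) y (- Ky x n y).
Proof.
intros Hx. unfold Lg.
replace (- Ky x n y) with (0 - / 2 * (2 * Ky x n y)) by field.
apply (derivable_pt_lim_minus (fun _ => x * ln (INR n) + ln (INR (fact n))) (fun t => / 2 * Ssq x t n)).
- apply derivable_pt_lim_const.
- apply derivable_pt_lim_scal. apply Ssq_deriv; auto.
Qed.

Lemma fB'_eq n y : fB' n y = Ky X n y - Ky (X + g) n y.
Proof. unfold fB', Ky, tB. rewrite sum_minus'. reflexivity. Qed.

Lemma fB_deriv n y : derivable_pt_lim (fB n) y (fB' n y).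
Proof.
unfold fB. rewrite fB'_eq.
replace (Ky X n y - Ky (X + g) n y) with (- Ky (X + g) n y - - Ky X n y) by ring.
apply (derivable_pt_lim_minus (fun t => Lg (X + g) t n) (fun t => Lg X t n));
  apply Lg_deriv_y; lra.
Qed.

Lemma fB_lim y : Un_cv (fun n => fB n y) (Dl g X y).
Proof.
apply is_lim_seq_Reals. unfold fB, Dl.
apply is_lim_seq_minus'; apply ell_lim; lra.
Qed.

Lemma tB_cont y j : continuity_pt (fun t => tB t j) y.
Proof.
pose proof (pos_INR j).
assert (A1 : 0 < (X + INR j) ^ 2 + y ^ 2) by nra.
assert (A2 : 0 < (X + g + INR j) ^ 2 + y ^ 2) by nra.
eapply cont_from_derive. unfold tB. auto_derive.
- split; lra.
- reflexivity.
Qed.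

Lemma fB'_cont n y : continuity_pt (fB' n) y.
Proof.
unfold fB'. induction n as [|m IH].
- simpl. apply tB_cont.
- simpl. apply (continuity_pt_plus (fun t => sum_f_R0 (tB t) m) (fun t => tB t (S m))); auto.
  apply tB_cont.
Qed.

Lemma tB_bound y Y k : Rabs y <= Y ->
  Rabs (tB y (S k)) <= 4 * Y * g / ((INR k + 1) * (INR k + 2)).
Proof.
intros HY. unfold tB. pose proof (pos_INR k) as Hk.
rewrite S_INR.
set (P := X + (INR k + 1)). set (Q := X + g + (INR k + 1)).
assert (HP : INR k + 1 <= P) by (unfold P; lra).
assert (HQ : P + g = Q) by (unfold P, Q; ring).
assert (HQ1 : 1 <= Q) by lra.
assert (A1 : 0 < P ^ 2 + y ^ 2) by nra.
assert (A2 : 0 < Q ^ 2 + y ^ 2) by nra.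
assert (HP0 : 0 < P) by lra. assert (HQ0 : 0 < Q) by lra.
assert (HPQ2 : 0 < P ^ 2 * Q ^ 2) by (apply Rmult_lt_0_compat; apply pow_lt; lra).
assert (HP2 : 0 < P ^ 2) by (apply pow_lt; lra).
assert (E : y / (P ^ 2 + y ^ 2) - y / (Q ^ 2 + y ^ 2) = y * (g * (P + Q) / ((P ^ 2 + y ^ 2) * (Q ^ 2 + y ^ 2)))).
{ rewrite <- HQ. field. rewrite HQ. lra. }
replace (X + (INR k + 1)) with P by reflexivity.
replace (X + g + (INR k + 1)) with Q by reflexivity.
rewrite E, Rabs_mult.
assert (F0 : 0 <= g * (P + Q) / ((P ^ 2 + y ^ 2) * (Q ^ 2 + y ^ 2))).
{ apply Rdiv_le_0_compat; [nra| nra]. }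
rewrite (Rabs_pos_eq _ F0).
assert (F1 : g * (P + Q) / ((P ^ 2 + y ^ 2) * (Q ^ 2 + y ^ 2)) <= g * (P + Q) / (P ^ 2 * Q ^ 2)).
{ apply frac_le; [nra| exact HPQ2|]. apply Rmult_le_compat; nra. }
assert (F2 : g * (P + Q) / (P ^ 2 * Q ^ 2) <= g * (2 * Q) / (P ^ 2 * Q ^ 2)).
{ apply frac_le_num; [nra| exact HPQ2]. }
assert (F3 : g * (2 * Q) / (P ^ 2 * Q ^ 2) = 2 * g / (P ^ 2 * Q)) by (field; lra).
assert (F4 : 2 * g / (P ^ 2 * Q) <= 2 * g / (P ^ 2)).
{ apply frac_le; [lra| exact HP2|]. nra. }
assert (F5 : 2 * g / (P ^ 2) <= 2 * g / ((INR k + 1) * (INR k + 1))).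
{ apply frac_le; [lra| nra|]. nra. }
assert (F6 : 2 * g / ((INR k + 1) * (INR k + 1)) <= 4 * g / ((INR k + 1) * (INR k + 2))).
{ pose proof (sq_bound k). unfold Rdiv in *.
  replace (4 * g * / ((INR k + 1) * (INR k + 2))) with (2 * g * (2 * / ((INR k + 1) * (INR k + 2)))) by ring.
  apply Rmult_le_compat_l; lra. }
pose proof (Rabs_pos y).
assert (Y0 : 0 <= Y) by lra.
assert (G0 : 0 <= 4 * g / ((INR k + 1) * (INR k + 2))).
{ apply Rdiv_le_0_compat; nra. }
replace (4 * Y * g / ((INR k + 1) * (INR k + 2))) with (Y * (4 * g / ((INR k + 1) * (INR k + 2)))) by (field; nra).
apply Rmult_le_compat; lra.
Qed.

Lemma GB_prop y Y : Rabs y <= Y -> Un_cv (fun n => fB' n y) (GB y) /\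
   forall k, Rabs (GB y - fB' k y) <= 4 * Y * g / (INR k + 1).
Proof.
intros HY. apply tele_lim. intros k. unfold fB'.
change (sum_f_R0 (tB y) (S k)) with (sum_f_R0 (tB y) k + tB y (S k)).
replace (sum_f_R0 (tB y) k + tB y (S k) - sum_f_R0 (tB y) k) with (tB y (S k)) by ring.
apply tB_bound; auto.
Qed.

Lemma DB_deriv y : derivable_pt_lim (fun t => Dl g X t) y (GB y).
Proof.
set (r := mkposreal 1 ltac:(lra)).
set (Y := Rabs y + 1).
assert (Hb : forall z, Boule y r z -> Rabs z <= Y).
{ intros z Hz. unfold Boule in Hz. simpl in Hz. unfold Y.
  replace z with ((z - y) + y) by ring. pose proof (Rabs_triang (z - y) y). lra. }
apply (derivable_pt_lim_CVU fB fB' (fun t => Dl g X t) GB y y r).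
- unfold Boule. simpl. replace (y - y) with 0 by ring. rewrite Rabs_R0. lra.
- intros z n Hz. apply fB_deriv.
- intros z Hz. apply fB_lim.
- apply CVU_of_bound with (4 * Y * g). intros z n Hz. apply GB_prop; auto.
- intros z Hz. apply (CVU_continuity fB' GB y r).
  + apply CVU_of_bound with (4 * Y * g). intros w n Hw. apply GB_prop; auto.
  + intros n w Hw. apply fB'_cont.
  + auto.
Qed.

Lemma tB_pos y j : 0 < y -> 0 < tB y j.
Proof.
intros Hy. unfold tB. pose proof (pos_INR j).
assert (A1 : 0 < (X + INR j) ^ 2 + y ^ 2) by nra.
assert ((X + INR j) ^ 2 + y ^ 2 < (X + g + INR j) ^ 2 + y ^ 2) by nra.
assert (y / ((X + g + INR j) ^ 2 + y ^ 2) < y / ((X + INR j) ^ 2 + y ^ 2)).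
{ unfold Rdiv. apply Rmult_lt_compat_l; auto. apply Rinv_lt_contravar; nra. }
lra.
Qed.

Lemma GB_pos y : 0 < y -> 0 < GB y.
Proof.
intros Hy. destruct (GB_prop y (Rabs y) (Rle_refl _)) as [H _].
apply is_lim_seq_Reals in H.
assert (Hn : forall n, fB' 0 y <= fB' n y).
{ induction n as [|m IH]; [lra|]. unfold fB' in *.
  change (sum_f_R0 ?f (S m)) with (sum_f_R0 f m + f (S m)). pose proof (tB_pos y (S m) Hy). lra. }
pose proof (is_lim_seq_le _ _ _ _ Hn (is_lim_seq_const _) H) as L.
simpl in L. pose proof (tB_pos y 0 Hy). unfold fB' in L. simpl in L. lra.
Qed.

End PartB.

Lemma is_derive_pairR (f g : R -> R) x f' g' :
  is_derive f x f' -> is_derive g x g' ->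
  is_derive (fun t => ((f t, g t) : C)) x ((f', g') : C).
Proof.
intros H1 H2. unfold is_derive in *.
apply (filterdiff_comp_2 f g (fun u v => (u,v)) _ _ (fun u v => (u,v)) H1 H2).
apply filterdiff_ext with (fun t => t).
- intros [u v]; reflexivity.
- apply filterdiff_ext_lin with (fun t => t).
  + apply filterdiff_id.
  + intros [u v]; reflexivity.
Qed.

Lemma is_derive_real_C (F : R -> R) (T : R -> C) x d :
  is_derive F x d -> locally x (fun t => ((F t, 0) : C) = T t) ->
  is_derive T x ((d, 0) : C).
Proof.
intros H L. apply (is_derive_ext_loc _ _ _ _ L).
apply is_derive_pairR; auto. apply (is_derive_const 0 x).
Qed.

Lemma is_derive_eq (f : R -> R) x l l' : is_derive f x l -> l = l' -> is_derive f x l'.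
Proof. intros H E; subst; auto. Qed.

Lemma scalR (a b : R) : scal a b = a * b.
Proof. unfold scal; simpl. unfold mult; simpl. ring. Qed.

Lemma Rpower_pos' a b : 0 < Rpower a b.
Proof. unfold Rpower. apply exp_pos. Qed.

Lemma lin_deriv c s x : is_derive (fun t => c + s * t) x s.
Proof. auto_derive; auto. ring. Qed.

Lemma DA_comp g c s x : 0 < g -> 0 < c + s * x ->
  is_derive (fun t => Dl g (c + s * t) 0) x (s * GA g (c + s * x)).
Proof.
intros Hg H.
apply (is_derive_comp (fun u => Dl g u 0) (fun t => c + s * t)).
- apply is_derive_Reals. apply DA_deriv; auto.
- apply lin_deriv.
Qed.

Theorem lemma3p7 (n k : nat) (gam : R) :
  0 < gam -> gam < INR n / 2 ->
  (1 <= k)%nat -> INR k < INR n / 2 - gam ->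
  let a0 := (INR n - INR k - 2) / 2 in
  (* (i) *)
  (forall a beta, a0 <= a -> 0 < beta -> beta <= INR k / 2 ->
     exists d : C, is_derive (fun x : R => Theta gam x (0, beta)) a d
                   /\ Im d = 0 /\ 0 < Re d) /\
  (* (ii) *)
  (forall a beta, a0 <= a -> 0 < beta -> beta <= INR k / 2 ->
     exists d : C, is_derive (fun y : R => Theta gam a (0, y)) beta d
                   /\ Im d = 0 /\ Re d < 0) /\
  (* (iii) *)
  (forall a b, a0 <= a -> 0 < b ->
     exists d : C, is_derive (fun y : R => Theta gam a (RtoC y)) b d
                   /\ Im d = 0 /\ 0 < Re d).
Proof.
intros Hg Hgn Hk Hkn a0.
set (c := (1 - gam) / 2).
split; [|split].
-
  intros a beta Ha Hb1 Hb2. unfold a0 in Ha.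
  set (F := fun t => Rpower 4 gam * exp (Dl gam (c + (t - beta) / 2) 0 + Dl gam (c + (t + beta) / 2) 0)).
  set (x1 := c + (a - beta) / 2). set (x2 := c + (a + beta) / 2).
  assert (H1 : 0 < x1) by (unfold x1, c; lra).
  assert (H2 : 0 < x2) by (unfold x2, c; lra).
  assert (HF : is_derive F a (F a * (/ 2 * GA gam x1 + / 2 * GA gam x2))).
  { unfold F. 
    apply (is_derive_ext (fun t => Rpower 4 gam * exp (Dl gam ((c - beta / 2) + / 2 * t) 0 + Dl gam ((c + beta / 2) + / 2 * t) 0))).
    { intros t. do 3 f_equal; f_equal; field. }
    replace x1 with ((c - beta / 2) + / 2 * a) by (unfold x1; field).
    replace x2 with ((c + beta / 2) + / 2 * a) by (unfold x2; field).
    replace (c + (a - beta) / 2) with ((c - beta / 2) + / 2 * a) by field.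
    replace (c + (a + beta) / 2) with ((c + beta / 2) + / 2 * a) by field.
    set (u := fun t => Dl gam ((c - beta / 2) + / 2 * t) 0 + Dl gam ((c + beta / 2) + / 2 * t) 0).
    assert (Hu : is_derive u a (/ 2 * GA gam ((c - beta / 2) + / 2 * a) + / 2 * GA gam ((c + beta / 2) + / 2 * a))).
    { unfold u. apply (is_derive_plus (fun t => Dl gam ((c - beta / 2) + / 2 * t) 0) (fun t => Dl gam ((c + beta / 2) + / 2 * t) 0)).
      - apply DA_comp; auto. replace (c - beta / 2 + / 2 * a) with x1 by (unfold x1; field). auto.
      - apply DA_comp; auto. replace (c + beta / 2 + / 2 * a) with x2 by (unfold x2; field). auto. }
    pose proof (is_derive_comp exp u a _ _ (is_derive_exp (u a)) Hu) as He.
    pose proof (is_derive_scal _ _ (Rpower 4 gam) _ He) as Hs.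
    eapply is_derive_eq; [exact Hs|]. unfold u. unfold scal; simpl; unfold mult; simpl; ring. }
  exists ((F a * (/ 2 * GA gam x1 + / 2 * GA gam x2), 0) : C).
  split; [|split; [reflexivity|]].
  + apply (is_derive_real_C F _ a _ HF).
    exists (mkposreal x1 H1). intros t Ht.
    assert (Ht' : Rabs (t - a) < x1) by exact Ht. apply Rabs_def2 in Ht'.
    rewrite Theta_real; [reflexivity| auto | unfold x1, c in *; lra | unfold x1, c in *; lra].
  + simpl. apply Rmult_lt_0_compat.
    * unfold F. apply Rmult_lt_0_compat; [apply Rpower_pos'| apply exp_pos].
    * pose proof (GA_pos gam Hg x1 H1). pose proof (GA_pos gam Hg x2 H2). lra.
-
  intros a beta Ha Hb1 Hb2. unfold a0 in Ha.
  set (F := fun t => Rpower 4 gam * exp (Dl gam (c + (a - t) / 2) 0 + Dl gam (c + (a + t) / 2) 0)).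
  set (x1 := c + (a - beta) / 2). set (x2 := c + (a + beta) / 2).
  assert (H1 : 0 < x1) by (unfold x1, c; lra).
  assert (H2 : 0 < x2) by (unfold x2, c; lra).
  assert (H12 : x1 < x2) by (unfold x1, x2; lra).
  assert (HF : is_derive F beta (F beta * (- / 2 * GA gam x1 + / 2 * GA gam x2))).
  { unfold F. 
    apply (is_derive_ext (fun t => Rpower 4 gam * exp (Dl gam ((c + a / 2) + - / 2 * t) 0 + Dl gam ((c + a / 2) + / 2 * t) 0))).
    { intros t. do 3 f_equal; f_equal; field. }
    replace x1 with ((c + a / 2) + - / 2 * beta) by (unfold x1; field).
    replace x2 with ((c + a / 2) + / 2 * beta) by (unfold x2; field).
    replace (c + (a - beta) / 2) with ((c + a / 2) + - / 2 * beta) by field.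
    replace (c + (a + beta) / 2) with ((c + a / 2) + / 2 * beta) by field.
    set (u := fun t => Dl gam ((c + a / 2) + - / 2 * t) 0 + Dl gam ((c + a / 2) + / 2 * t) 0).
    assert (Hu : is_derive u beta (- / 2 * GA gam ((c + a / 2) + - / 2 * beta) + / 2 * GA gam ((c + a / 2) + / 2 * beta))).
    { unfold u. apply (is_derive_plus (fun t => Dl gam ((c + a / 2) + - / 2 * t) 0) (fun t => Dl gam ((c + a / 2) + / 2 * t) 0)).
      - apply DA_comp; auto. replace (c + a / 2 + - / 2 * beta) with x1 by (unfold x1; field). auto.
      - apply DA_comp; auto. replace (c + a / 2 + / 2 * beta) with x2 by (unfold x2; field). auto. }
    pose proof (is_derive_comp exp u beta _ _ (is_derive_exp (u beta)) Hu) as He.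
    pose proof (is_derive_scal _ _ (Rpower 4 gam) _ He) as Hs.
    eapply is_derive_eq; [exact Hs|]. unfold u. unfold scal; simpl; unfold mult; simpl; ring. }
  exists ((F beta * (- / 2 * GA gam x1 + / 2 * GA gam x2), 0) : C).
  split; [|split; [reflexivity|]].
  + apply (is_derive_real_C F _ beta _ HF).
    exists (mkposreal x1 H1). intros t Ht.
    assert (Ht' : Rabs (t - beta) < x1) by exact Ht. apply Rabs_def2 in Ht'.
    rewrite Theta_real; [reflexivity| auto | unfold x1, x2, c in *; lra | unfold x1, x2, c in *; lra].
  + simpl. 
    assert (0 < F beta) by (unfold F; apply Rmult_lt_0_compat; [apply Rpower_pos'| apply exp_pos]).
    pose proof (GA_decr gam Hg x1 x2 H1 H12).
    assert (- / 2 * GA gam x1 + / 2 * GA gam x2 < 0) by lra.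
    nra.
-
  intros a b Ha Hb. unfold a0 in Ha.
  set (X := c + a / 2).
  assert (HX : 0 < X) by (unfold X, c; lra).
  set (F := fun t => Rpower 4 gam * exp (2 * Dl gam X (0 + / 2 * t))).
  assert (HF : is_derive F b (F b * (2 * (/ 2 * GB gam X (/ 2 * b))))).
  { unfold F.
    set (u := fun t => 2 * Dl gam X (0 + / 2 * t)).
    assert (Hu : is_derive u b (2 * (/ 2 * GB gam X (/ 2 * b)))).
    { unfold u. apply is_derive_scal.
      apply (is_derive_comp (fun y => Dl gam X y) (fun t => 0 + / 2 * t)).
      - apply is_derive_Reals. replace (0 + / 2 * b) with (/ 2 * b) by ring. apply DB_deriv; auto.
      - apply lin_deriv. }
    pose proof (is_derive_comp exp u b _ _ (is_derive_exp (u b)) Hu) as He.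
    pose proof (is_derive_scal _ _ (Rpower 4 gam) _ He) as Hs.
    eapply is_derive_eq; [exact Hs|]. unfold u. unfold scal; simpl; unfold mult; simpl; ring. }
  exists ((F b * (2 * (/ 2 * GB gam X (/ 2 * b))), 0) : C).
  split; [|split; [reflexivity|]].
  + apply (is_derive_real_C F _ b _ HF).
    exists (mkposreal 1 Rlt_0_1). intros t Ht.
    rewrite Theta_cplx by (auto; unfold X, c in HX; exact HX).
    unfold F. replace (0 + / 2 * t) with (t / 2) by field. reflexivity.
  + simpl.
    assert (0 < F b) by (unfold F; apply Rmult_lt_0_compat; [apply Rpower_pos'| apply exp_pos]).
    pose proof (GB_pos gam X Hg HX (/ 2 * b) ltac:(lra)).
    nra.
Qed.
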